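(* Let $C$ be a binary linear $[n,k]$ code (a $k$-dimensional subspace of $\mathbb{F}_2^n$) whose hull $\mathrm{Hull}(C)=C\cap C^{\perp}$ has dimension $\ell$, where $0\le \ell\le k$. Let $G$ be a $k\times n$ generator matrix of $C$ with rows $\mathbf r_1,\dots,\mathbf r_k$, and let $H$ be an $(n-k)\times n$ parity check matrix of $C$ with rows $\mathbf s_1,\dots,\mathbf s_{n-k}$. Suppose $\mathbf x=(x_1,\dots,x_n)\in\mathbb{F}_2^n$ satisfies $\mathbf x\cdot\mathbf x=1$. Put $y_i=\mathbf x\cdot \mathbf r_i$ for $1\le i\le k$ and $z_j=\mathbf x\cdot\mathbf s_j$ for $1\le j\le n-k$. Then: (a) the matrix \[ G_1=\begin{bmatrix} 1 & 0 & x_1\ \cdots\ x_n\\ y_1 & y_1 & \mathbf r_1\\ \vdots & \vdots & \vdots\\ y_k & y_k & \mathbf r_k\end{bmatrix} \] generates a binary linear $[n+2,k+1]$ code $C_1$ whose hull has dimension $\ell+1$; (b) the matrix \[ H_1=\begin{bmatrix} 1 & 0 & x_1\ \cdots\ x_n\\ z_1 & z_1 & \mathbf s_1\\ \vdots & \vdots & \vdots\\ z_{n-k} & z_{n-k} & \mathbf s_{n-k}\end{bmatrix} \] is a parity check matrix for $C_1$.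
   Context: All codes are binary linear codes, with the dual $C^{\perp}=\{\mathbf u\in\mathbb F_2^n : \mathbf u\cdot\mathbf c=0 \text{ for all } \mathbf c\in C\}$ taken with respect to the standard dot product. The hull of $C$ is $\mathrm{Hull}(C)=C\cap C^{\perp}$. A parity check matrix of $C$ is a generator matrix of $C^{\perp}$. The code $C_1$ is called Construction I. *)

(* Defs.v *)
From mathcomp Require Import all_boot all_order all_algebra.
Set Implicit Arguments. Unset Strict Implicit. Unset Printing Implicit Defensive.
Import GRing.Theory.
Local Open Scope ring_scope.

(* Binary vectors are row vectors 'rV['F_2]_n; a binary linear code is
   represented by the row space of a matrix (mxalgebra, scope %MS). *)

Definition dot (n : nat) (u v : 'rV['F_2]_n) : 'F_2 := (u *m v^T) 0 0.

(* A matrix whose row space is the dual code C^perp of the code spanned by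
   the rows of A: the row space of kermx A^T is {u | u *m A^T = 0},
   i.e. the vectors orthogonal (dot product) to every row of A. *)
Definition dualmx (m n : nat) (A : 'M['F_2]_(m, n)) : 'M['F_2]_n := kermx A^T.

Definition hullmx (m n : nat) (A : 'M['F_2]_(m, n)) : 'M['F_2]_n :=
  (A :&: dualmx A)%MS.

(* The extended generator of Construction I: first row (1, 0, x), then rows
   (y_i, y_i, r_i) with y_i = x . r_i. *)
Definition constrI (m n : nat) (x : 'rV['F_2]_n) (A : 'M['F_2]_(m, n))
  : 'M['F_2]_(1 + m, 2 + n) :=
  col_mx (row_mx (\row_(j < 2) (if j == 0 :> nat then 1 else 0)) x)
         (row_mx (\matrix_(i < m, j < 2) dot x (row i A)) A).

(* Main.v *)
Require Import Defs.
From mathcomp Require Import all_boot all_order all_algebra.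
From mathcomp Require Import zify.
Import GRing.Theory.
Local Open Scope ring_scope.

Lemma addF2 (a : 'F_2) : a + a = 0.
Proof. case: a => [[|[|i]]] Hi; try (by apply: val_inj); by []. Qed.

Lemma addF2mx p q (M : 'M['F_2]_(p, q)) : M + M = 0.
Proof. by apply/matrixP => i j; rewrite !mxE addF2. Qed.

Section S.
Variables (n : nat) (x : 'rV['F_2]_n).
Hypothesis hx : dot x x = 1.

Definition u2 : 'rV['F_2]_2 := \row_(j < 2) (if j == 0 :> nat then 1 else 0).
Definition XX : 'M['F_2]_(n, 2) := \matrix_(i < n, j < 2) x 0 i.
Definition PP : 'M['F_2]_(n, 2 + n) := row_mx XX 1%:M.
Definition ee : 'rV['F_2]_(2 + n) := row_mx u2 x.

Lemma constrIE m (A : 'M['F_2]_(m, n)) : constrI x A = col_mx ee (A *m PP).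
Proof.
rewrite /constrI /PP mul_mx_row mulmx1; congr col_mx; congr row_mx.
apply/matrixP => i j; rewrite !mxE /dot mxE; apply: eq_bigr => t _.
by rewrite !mxE mulrC.
Qed.

Lemma xxT : x *m x^T = 1%:M.
Proof. by rewrite [LHS]mx11_scalar; move: hx; rewrite /dot => ->. Qed.

Lemma u2u2T : u2 *m u2^T = 1%:M.
Proof.
apply/matrixP => i j; rewrite !ord1 !mxE big_ord_recl big_ord1 !mxE /=.
by rewrite mulr1 mulr0 addr0.
Qed.

Lemma eeT : ee *m ee^T = 0.
Proof. by rewrite /ee tr_row_mx mul_row_col u2u2T xxT addF2mx. Qed.

Lemma u2XT : u2 *m XX^T = x.
Proof.
apply/matrixP => i j; rewrite !ord1 !mxE big_ord_recl big_ord1 !mxE /=.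
by rewrite mul1r mul0r addr0.
Qed.

Lemma ePT : ee *m PP^T = 0.
Proof. by rewrite /ee /PP tr_row_mx trmx1 mul_row_col mulmx1 u2XT addF2mx. Qed.

Lemma PeT : PP *m ee^T = 0.
Proof. by rewrite -[PP]trmxK -trmx_mul ePT trmx0. Qed.

Lemma XXT : XX *m XX^T = 0.
Proof.
apply/matrixP => i j; rewrite !mxE big_ord_recl big_ord1 !mxE /=.
by rewrite addF2.
Qed.

Lemma PPT : PP *m PP^T = 1%:M.
Proof. by rewrite /PP tr_row_mx trmx1 mul_row_col mulmx1 XXT add0r. Qed.

Lemma constrI_mulT m p (B : 'M['F_2]_(m, n)) (D : 'M['F_2]_(p, n)) :
  constrI x B *m (constrI x D)^T = block_mx 0 0 0 (B *m D^T).
Proof.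
rewrite !constrIE tr_col_mx mul_col_row eeT trmx_mul mulmxA ePT mul0mx.
by rewrite -mulmxA PeT mulmx0 -(mulmxA B) (mulmxA PP) PPT mul1mx.
Qed.

Definition rr : 'rV['F_2]_(1 + n) := row_mx 1%:M x.
Definition T1 : 'M['F_2]_(2, 1 + n) := \matrix_(j < 2, k < 1 + n) rr 0 k.
Definition TT : 'M['F_2]_(2 + n, 1 + n) := col_mx T1 (row_mx 0 1%:M).

Lemma constrI_T m (A : 'M['F_2]_(m, n)) :
  constrI x A *m TT = block_mx 1%:M 0 0 A.
Proof.
have h1 : u2 *m T1 = rr.
  apply/matrixP => i j; rewrite !ord1 !mxE big_ord_recl big_ord1 !mxE /=.
  by rewrite mul1r mul0r addr0.
have h2 : XX *m T1 = 0.
  apply/matrixP => i j; rewrite !mxE big_ord_recl big_ord1 !mxE /=.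
  by rewrite addF2.
rewrite constrIE mul_col_mx /ee /TT /PP !mul_row_col h1 -mulmxA mul_row_col h2 add0r.
rewrite !mul_mx_row !mulmx0 !mulmx1.
rewrite /rr add_row_mx addr0 addF2mx block_mxEv.
done.
Qed.

Lemma rank_constrI m (A : 'M['F_2]_(m, n)) : \rank (constrI x A) = (\rank A).+1.
Proof.
apply/eqP; rewrite eqn_leq; apply/andP; split.
  rewrite constrIE -addsmxE; apply: leq_trans (mxrank_adds_leqif _ _) _.
  rewrite -[(\rank A).+1]add1n leq_add ?rank_leq_row ?mxrankM_maxl //.
have := mxrankM_maxl (constrI x A) TT.
by rewrite constrI_T rank_diag_block_mx mxrank1.
Qed.

End S.

Theorem theorem1 (n k l : nat) (G : 'M['F_2]_(k, n)) (H : 'M['F_2]_(n - k, n))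
    (x : 'rV['F_2]_n) :
  (k <= n)%N ->
  \rank G = k ->                       (* G generates an [n,k] code C *)
  (l <= k)%N ->
  \rank (hullmx G) = l ->              (* dim Hull(C) = l *)
  \rank H = (n - k)%N ->               (* H has independent rows ... *)
  (H == dualmx G)%MS ->                (* ... spanning C^perp: a parity check matrix *)
  dot x x = 1 ->
  (\rank (constrI x G) = k.+1 /\ \rank (hullmx (constrI x G)) = l.+1) /\
  (\rank (constrI x H) = (n - k).+1 /\ (constrI x H == dualmx (constrI x G))%MS).
Proof.
move=> kn rG lk rhG rH HG hx.
have rC1 : \rank (constrI x G) = k.+1 by rewrite rank_constrI // rG.
have rC2 : \rank (constrI x H) = (n - k).+1 by rewrite rank_constrI // rH.
split; split => //.
  have e1 := mxrank_mul_ker (constrI x G) (constrI x G)^T.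
  have e2 := mxrank_mul_ker G G^T.
  move: e1 e2; rewrite /hullmx /dualmx in rhG *.
  rewrite constrI_mulT // rank_diag_block_mx mxrank0 add0n rhG rC1 => e1 e2.
  rewrite rG in e2; move: (\rank (G *m G^T)) e1 e2 => a e1 e2.
  move: (\rank (constrI x G :&: _)%MS) e1 => b e1; lia.
have sub : (constrI x H <= dualmx (constrI x G))%MS.
  apply/sub_kermxP; rewrite constrI_mulT //.
  have /andP[/sub_kermxP -> _] := HG.
  by rewrite block_mx0.
rewrite -(mxrank_leqif_eq sub) rC2 /dualmx mxrank_ker mxrank_tr rC1.
apply/eqP; lia.
Qed.
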